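(* Let $n\ge 4$ and let $G$ be a labeled star graph $K_{1,n-1}$ with vertex set $[n]$ (with any labeling). Then $X(G;\mathbf{x},q)$ is not symmetric.
   Context: A labeled graph is a finite simple graph with vertex set $[n]$. A proper coloring is $c\colon[n]\to\{1,2,\dots\}$ with adjacent vertices colored differently; $\operatorname{asc}(c)=\#\{ij\in E: i<j,\ c(i)<c(j)\}$. The CQF is $X(G;\mathbf{x},q)=\sum_{c \text{ proper}} x_{c(1)}\cdots x_{c(n)}q^{\operatorname{asc}(c)}$; it is symmetric if each coefficient of $q^k$ is a symmetric function. *)

(* Defs.v *)
From HB Require Import structures.
From mathcomp Require Import all_boot all_order all_algebra.
From mathcomp Require Import mpoly.
Set Implicit Arguments. Unset Strict Implicit. Unset Printing Implicit Defensive.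
Import GRing.Theory.
Local Open Scope ring_scope.

(* A labeled graph on [n] is modelled with vertex type 'I_n (vertex i+1 of the
   paper is the ordinal i; the order on labels is the order of the ordinals),
   and a boolean adjacency relation [e]. *)
Definition simple_graph n (e : rel 'I_n) : Prop :=
  (forall u, ~~ e u u) /\ (forall u v, e u v = e v u).

Definition is_star n (e : rel 'I_n) : Prop :=
  exists c : 'I_n, forall u v : 'I_n, e u v = (u != v) && ((u == c) || (v == c)).

(* Colorings with colors among the first N colors 1..N (color j+1 is the
   ordinal j : 'I_N). *)
Definition proper n N (e : rel 'I_n) (c : {ffun 'I_n -> 'I_N}) : bool :=
  [forall u, forall v, e u v ==> (c u != c v)].

Definition asc n N (e : rel 'I_n) (c : {ffun 'I_n -> 'I_N}) : nat :=
  #|[set p : 'I_n * 'I_n | [&& (p.1 < p.2)%N, e p.1 p.2 & (c p.1 < c p.2)%N]]|.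

(* The truncation of the chromatic quasisymmetric function to the variables
   x_1, ..., x_N (i.e. setting x_j = 0 for j > N), as a polynomial in N
   variables with coefficients in Z[q]. *)
Definition CQF_trunc n (e : rel 'I_n) (N : nat) : {mpoly {poly int}[N]} :=
  \sum_(c : {ffun 'I_n -> 'I_N} | proper e c)
     ('X ^+ asc e c : {poly int}) *: \prod_(i : 'I_n) 'X_(c i).

(* X(G; x, q) is symmetric iff every coefficient of q^k is a symmetric
   function, iff (since permutations of variables act coefficientwise in q and
   a formal power series is symmetric iff all its finite truncations are)
   each truncation is a symmetric polynomial. *)
Definition CQF_symmetric n (e : rel 'I_n) : Prop :=
  forall N : nat, CQF_trunc e N \is symmetric.

(* Main.v *)
Require Import Defs.
From HB Require Import structures.
From mathcomp Require Import all_boot all_order all_algebra.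
From mathcomp Require Import mpoly.
Set Implicit Arguments. Unset Strict Implicit. Unset Printing Implicit Defensive.
From mathcomp Require Import zify fingroup perm.
Import GRing.Theory Num.Theory.
Local Open Scope ring_scope.

Definition mono n N (c : {ffun 'I_n -> 'I_N}) : 'X_{1..N} :=
  (\sum_(i : 'I_n) U_(c i))%MM.

Lemma monoE n N (c : {ffun 'I_n -> 'I_N}) j :
  mono c j = (\sum_(i : 'I_n) (c i == j))%N.
Proof. by rewrite /mono mnm_sumE; apply: eq_bigr => i _; rewrite mnm1E. Qed.

Lemma coefCQF n (e : rel 'I_n) N m k :
  ((CQF_trunc e N)@_m)`_k =
  (\sum_(c : {ffun 'I_n -> 'I_N} | Defs.proper e c && (mono c == m)) (asc e c == k))%:R.
Proof.
rewrite /CQF_trunc raddf_sum /= coef_sum natr_sum big_mkcondr /=.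
apply: eq_bigr => c _.
rewrite mcoeffZ.
have -> : \prod_(i : 'I_n) ('X_(c i) : {mpoly {poly int}[N]}) = 'X_[mono c].
  by rewrite /mono (big_morph _ (@mpolyXD _ _) (@mpolyX0 _ _)).
rewrite mcoeffX mulr_natr coefMn coefXn.
by case: (mono c == m) => //=; rewrite mulr1n eq_sym.
Qed.

Local Close Scope ring_scope.
Section Star.
Variables (n : nat) (e : rel 'I_n) (ctr : 'I_n).
Hypothesis He : forall u v, e u v = (u != v) && ((u == ctr) || (v == ctr)).

Lemma ascE N (c : {ffun 'I_n -> 'I_N}) : asc e c =
  (\sum_(j : 'I_n) ((ctr < j) && (c ctr < c j)) + \sum_(i : 'I_n) ((i < ctr) && (c i < c ctr)))%N.
Proof.
rewrite /asc -sum1_card big_mkcond /=.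
set S := [set p : 'I_n * 'I_n | _].
transitivity (\sum_(i : 'I_n) \sum_(j : 'I_n) (if (i,j) \in S then 1 else 0))%N.
  by rewrite pair_big /=; apply: eq_bigr => -[i j].
rewrite (bigD1 ctr) //=; congr (_ + _)%N.
  apply: eq_bigr => j _; rewrite inE /= He eqxx /=.
  case: (ltnP ctr j) => h /=; last by [].
  have -> : ctr != j by apply/eqP => E; rewrite E ltnn in h.
  by case: (_ < _)%N.
rewrite [RHS](bigD1 ctr) //= ltnn /= add0n.
apply: eq_bigr => i ni.
rewrite (bigD1 ctr) //= big1 ?addn0.
  rewrite inE /= He eqxx orbT ni /=.
  by case: (_ && _).
move=> j nj; rewrite inE /= He (negbTE ni) (negbTE nj) /=.
by rewrite andbF andbF.
Qed.

Lemma sum_split (P : pred 'I_n) w :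
  (\sum_(j : 'I_n) P j = \sum_(j : 'I_n) (P j && (j != w)) + P w)%N.
Proof.
rewrite (bigD1 w) //= [X in (_ = X + _)%N](bigD1 w) //= eqxx andbF add0n addnC.
by congr (_ + _)%N; apply: eq_bigr => j /negbTE ->; rewrite andbT.
Qed.

Lemma sum_eq1 (w : 'I_n) : (\sum_(j : 'I_n) (j == w) = 1)%N.
Proof. by rewrite (bigD1 w) //= eqxx big1 // => j /negbTE ->. Qed.

Lemma sum_neq (w : 'I_n) : (\sum_(j : 'I_n) (j != w) = n.-1)%N.
Proof.
have := sum_split predT w; rewrite /= addn1 sum_nat_const card_ord muln1.
move=> h; rewrite [in RHS]h /=; done.
Qed.

Definition A := (\sum_(j : 'I_n) (ctr < j))%N.
Definition B := (\sum_(j : 'I_n) (j < ctr))%N.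

Lemma AB : (A + B = n.-1)%N.
Proof.
rewrite /A /B -big_split -(sum_neq ctr); apply: eq_bigr => j _ /=.
case: (ltngtP ctr j) => h.
- by have -> : j != ctr by apply/eqP => E; rewrite E ltnn in h.
- by have -> : j != ctr by apply/eqP => E; rewrite E ltnn in h.
- by rewrite (val_inj h) eqxx.
Qed.

Lemma proper_ctr N (c : {ffun 'I_n -> 'I_N}) : Defs.proper e c ->
  forall v, v != ctr -> (c v : nat) != c ctr.
Proof.
move=> pc v nv; move: pc => /forallP /(_ v) /forallP /(_ ctr).
by rewrite He nv eqxx orbT /=.
Qed.

Definition o1 : 'I_3 := @Ordinal 3 1 isT.

Lemma asc_zero (c : {ffun 'I_n -> 'I_3}) : Defs.proper e c -> (c ctr : nat) != 1 ->
  asc e c = A \/ asc e c = B.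
Proof.
move=> pc h1; rewrite ascE.
have : (c ctr : nat) = 0 \/ (c ctr : nat) = 2.
  by have := ltn_ord (c ctr); move: h1; case: (c ctr) => [[|[|[|k]]] ?] //=; auto.
case=> h.
- left; rewrite h [X in (_ + X)%N]big1 ?addn0 /A => [|i _]; last by rewrite ltn0 andbF.
  apply: eq_bigr => j _; case: (ltnP ctr j) => hj //=.
  have := proper_ctr pc (v := j); rewrite h lt0n => -> //.
  by apply/eqP => E; rewrite E ltnn in hj.
- right; rewrite h [X in (X + _)%N]big1 ?add0n /B => [|j _]; last first.
    by have := ltn_ord (c j); rewrite ltnNge => /negbTE ->; rewrite andbF.
  apply: eq_bigr => i _; case: (ltnP i ctr) => hi //=.
  have := proper_ctr pc (v := i); rewrite h => /(_ _) ne.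
  have {}ne : (c i : nat) != 2 by apply: ne; apply/eqP => E; rewrite E ltnn in hi.
  by have := ltn_ord (c i); move: ne; case: (c i) => [[|[|[|k]]] ?] //=.
Qed.

Definition o0 : 'I_3 := @Ordinal 3 0 isT.
Definition o2 : 'I_3 := @Ordinal 3 2 isT.
Definition col (w : 'I_n) : {ffun 'I_n -> 'I_3} :=
  [ffun i => if i == ctr then o1 else if i == w then o0 else o2].

Lemma col_proper w : w != ctr -> Defs.proper e (col w).
Proof.
move=> nw; apply/forallP => u; apply/forallP => v; apply/implyP.
rewrite He => /andP [nuv /orP [/eqP Eu|/eqP Ev]].
- subst u; rewrite !ffunE eqxx [v == ctr]eq_sym (negbTE nuv).
  by case: (v == w).
- subst v; rewrite !ffunE eqxx (negbTE nuv).
  by case: (u == w).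
Qed.

Lemma asc_col w : asc e (col w) =
  (\sum_(j : 'I_n) ((ctr < j) && (j != w)) + \sum_(i : 'I_n) ((i < ctr) && (i == w)))%N.
Proof.
rewrite ascE; congr (_ + _)%N; apply: eq_bigr => j _; rewrite !ffunE eqxx.
- case: (ltnP ctr j) => h //=.
  have -> : (j == ctr) = false by apply/negbTE/eqP => E; rewrite E ltnn in h.
  by case: (j == w).
- case: (ltnP j ctr) => h //=.
  have -> : (j == ctr) = false by apply/negbTE/eqP => E; rewrite E ltnn in h.
  by case: (j == w).
Qed.

Lemma asc_col_gt (w : 'I_n) : ctr < w -> asc e (col w) = A.-1.
Proof.
move=> h; rewrite asc_col /A (sum_split (fun j => ctr < j) w) /= h addn1 /=.
rewrite [X in (_ + X)%N]big1 ?addn0 // => i _; case: (ltnP i ctr) => hi //=.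
suff -> : (i == w) = false by []. by apply/negbTE/eqP => E; subst i; move: (ltn_trans h hi); rewrite ltnn.
Qed.

Lemma asc_col_lt (w : 'I_n) : w < ctr -> asc e (col w) = A.+1.
Proof.
move=> h; rewrite asc_col /A -[(\sum_(j < n) _).+1]addn1; congr (_ + _)%N.
  apply: eq_bigr => j _; case: (ltnP ctr j) => hj //=.
  suff -> : j != w by []. by apply/eqP => E; subst j; move: (ltn_trans h hj); rewrite ltnn.
rewrite (bigD1 w) //= h eqxx big1 // => i /negbTE ->; by rewrite andbF.
Qed.
End Star.

Theorem proposition5p2 (n : nat) (e : rel 'I_n) :
  (4 <= n)%N -> simple_graph e -> is_star e -> ~ CQF_symmetric e.
Proof.
move=> n4 _ [ctr He] Hsym.
have hAB := AB ctr.
have [w [nw [hk1 hk2]]] : exists w : 'I_n, w != ctr /\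
    asc e (col ctr w) != A ctr /\ asc e (col ctr w) != B ctr.
  case: (boolP ((0 < A ctr) && (B ctr != (A ctr).-1))).
    move=> /andP [hA hB].
    case: (pickP (fun j : 'I_n => ctr < j)) => [w hw | h0]; last first.
      by move: hA; rewrite /A big1 // => j _; rewrite h0.
    exists w; split; first by apply/eqP => E; rewrite E ltnn in hw.
    rewrite (asc_col_gt He hw); split; last by rewrite eq_sym.
    by apply/eqP; lia.
  move=> hn.
  have [hB1 hB2] : 0 < B ctr /\ B ctr != (A ctr).+1.
    move: hn; rewrite negb_and -leqNgt negbK => hn.
    split; [|apply/eqP]; move: hn => /orP [] /eqP; lia.
  case: (pickP (fun j : 'I_n => j < ctr)) => [w hw | h0]; last first.
    by move: hB1; rewrite /B big1 // => j _; rewrite h0.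
  exists w; split; first by apply/eqP => E; rewrite E ltnn in hw.
  rewrite (asc_col_lt He hw); split; last by rewrite eq_sym.
  by apply/eqP; lia.
pose m := mono (col ctr w).
pose s := tperm o1 o2.
have heq : ((CQF_trunc e 3)@_m = (CQF_trunc e 3)@_[multinom m (s i) | i < 3])%R.
  by rewrite -mcoeff_sym (issymP _ (Hsym 3)).
move: (congr1 (fun q : {poly int} => (q`_(asc e (col ctr w)))%R) heq).
rewrite /= !coefCQF.
rewrite [X in _ = (X%:R)%R]big1; last first.
  move=> c /andP [pc /eqP hm].
  have hc : (c ctr : nat) != 1%N.
    apply/eqP => hc1.
    have h1 : (mono c o1 <= 1)%N.
      rewrite monoE; apply: (@leq_trans (\sum_(i : 'I_n) (i == ctr))%N); last by rewrite sum_eq1.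
      apply: leq_sum => i _.
      case: (eqVneq i ctr) => [->|ni]; first by case: (_ == _).
      have := proper_ctr He pc ni; rewrite hc1.
      by move=> h; have -> : (c i == o1) = false by exact: negbTE h.
    have h2 : (n.-2 <= mono c o1)%N.
      rewrite hm mnmE /s tpermL /m monoE.
      have hs := sum_split (fun i : 'I_n => i != ctr) w.
      rewrite /= sum_neq nw addn1 in hs.
      suff -> : (\sum_(i : 'I_n) (col ctr w i == o2) =
                 \sum_(i : 'I_n) ((i != ctr) && (i != w)))%N by move: hs => /(congr1 predn) /= <-.
      apply: eq_bigr => i _; rewrite ffunE.
      by case: (i == ctr); case: (i == w).
    lia.
  have [->|->] := asc_zero He pc hc.
    by rewrite eq_sym (negbTE hk1).
  by rewrite eq_sym (negbTE hk2).
rewrite (bigD1 (col ctr w)) /=; last by rewrite col_proper // eqxx.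
by rewrite eqxx add1n; move/eqP; rewrite pnatr_eq0.
Qed.
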